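(* Let $(U,g_1)$ have constant curvature $K_1$ and $(V,g_2)$ be flat, and let $f$ be a function on $U$. Suppose $u^1,\dots,u^p$ are functions on $U$ with $g_1^*(du^i,du^j)=G_1^{ij}-K_1u^iu^j$ for a constant nondegenerate matrix $G_1$, that $f=u^1$, that $G_1^{1j}=0$ for all $j\ne p$ and $G_1^{1p}=b\neq0$, and that $g_1^*(df,df)=-K_1f^2$. Suppose $v^1,\dots,v^{n_2}$ are functions on $V$ with $g_2^*(dv^k,dv^m)=G_2^{km}$ constant and nondegenerate, and $\phi$ is a function on $V$ with $g_2^*(d\phi,dv^i)=v^i$ for all $i$ and $g_2^*(d\phi,d\phi)=2\phi$. Let $g=g_1+f^{-2}g_2$ on $U\times V$ (contravariant warped product). Then the functions $w=(u^1,\dots,u^{p-1},\ \tilde u^p,\ fv^1,\dots,fv^{n_2})$ with $\tilde u^p=u^p-b\,f\phi$ satisfy $g^*(dw^a,dw^b)=G^{ab}-K_1w^aw^b$ with $G=\begin{pmatrix}G_1&0\\0&G_2\end{pmatrix}$; in particular they form (generalised) flat coordinates for $g$.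
   Context: $g_1,g_2$ are treated as contravariant metrics and $g^*$ (resp. $g_i^*$) denotes the pairing of covectors; functions on $U$ or $V$ are pulled back to $U\times V$. The contravariant metric $g_1+f^{-2}g_2$ acts on covectors by $g^*(\omega,\eta)=g_1^*(\omega_U,\eta_U)+f^{-2}g_2^*(\omega_V,\eta_V)$. *)

(* Defs.v *)
(* Local coordinates: U ⊆ R^n1, V ⊆ R^n2 open,
   points are row vectors 'rV[R]_n. *)
From HB Require Import structures.
From mathcomp Require Import all_boot all_order all_algebra.
From mathcomp Require Import all_classical all_reals all_analysis.
Set Implicit Arguments. Unset Strict Implicit. Unset Printing Implicit Defensive.
Import Order.TTheory GRing.Theory Num.Theory.
Import numFieldNormedType.Exports.
Local Open Scope classical_set_scope.
Local Open Scope ring_scope.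

Section Defs.
Variable R : realType.

Definition partial (n : nat) (i : 'I_n) (F : 'rV[R]_n -> R) (x : 'rV[R]_n) : R :=
  'D_(delta_mx 0 i) F x.

Fixpoint smoothk (n : nat) (U : set 'rV[R]_n) (k : nat) (F : 'rV[R]_n -> R) : Prop :=
  (forall x, U x -> differentiable F x) /\
  match k with 0 => True | k'.+1 => forall i, smoothk U k' (partial i F) end.

Definition smooth_on (n : nat) (U : set 'rV[R]_n) (F : 'rV[R]_n -> R) : Prop :=
  forall k, smoothk U k F.

(* contravariant (pseudo-Riemannian) metric on U: smooth, symmetric, nondegenerate *)
Definition is_cmetric (n : nat) (U : set 'rV[R]_n) (g : 'rV[R]_n -> 'M[R]_n) : Prop :=
  (forall i j, smooth_on U (fun x => g x i j)) /\
  (forall x, U x -> (g x)^T = g x) /\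
  (forall x, U x -> g x \in unitmx).

Definition gstar (n : nat) (g : 'rV[R]_n -> 'M[R]_n) (F H : 'rV[R]_n -> R)
  (x : 'rV[R]_n) : R :=
  \sum_(i < n) \sum_(j < n) g x i j * partial i F x * partial j H x.

Definition gcov (n : nat) (g : 'rV[R]_n -> 'M[R]_n) (x : 'rV[R]_n) : 'M[R]_n :=
  invmx (g x).

Definition Gamma (n : nat) (g : 'rV[R]_n -> 'M[R]_n) (k i j : 'I_n)
  (x : 'rV[R]_n) : R :=
  2^-1 * \sum_(l < n) g x k l *
    (partial i (fun z => gcov g z j l) x + partial j (fun z => gcov g z i l) x
     - partial l (fun z => gcov g z i j) x).

(* Riemann tensor R^l_{ijk}, with R(X,Y)Z = ∇_X∇_Y Z - ∇_Y∇_X Z - ∇_[X,Y] Z,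
   R(∂_i,∂_j)∂_k = R^l_{ijk} ∂_l *)
Definition Riem (n : nat) (g : 'rV[R]_n -> 'M[R]_n) (l i j k : 'I_n)
  (x : 'rV[R]_n) : R :=
  partial i (Gamma g l j k) x - partial j (Gamma g l i k) x
  + \sum_(m < n) (Gamma g l i m x * Gamma g m j k x - Gamma g l j m x * Gamma g m i k x).

(* constant sectional curvature K: R(X,Y)Z = K (g(Y,Z) X - g(X,Z) Y) *)
Definition const_curv (n : nat) (U : set 'rV[R]_n) (g : 'rV[R]_n -> 'M[R]_n) (K : R)
  : Prop :=
  forall x, U x -> forall l i j k,
    Riem g l i j k x = K * ((l == i)%:R * gcov g x j k - (l == j)%:R * gcov g x i k).

Definition flat (n : nat) (U : set 'rV[R]_n) (g : 'rV[R]_n -> 'M[R]_n) : Prop :=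
  const_curv U g 0.

(* contravariant warped product g = g1 + f^{-2} g2 on U x V, acting on
   differentials of functions F(x,y):
   g^*(dF,dH) = g1^*(d_U F, d_U H) + f^{-2} g2^*(d_V F, d_V H) *)
Definition gstarW (n1 n2 : nat) (g1 : 'rV[R]_n1 -> 'M[R]_n1) (g2 : 'rV[R]_n2 -> 'M[R]_n2)
  (f : 'rV[R]_n1 -> R) (F H : 'rV[R]_n1 -> 'rV[R]_n2 -> R)
  (x : 'rV[R]_n1) (y : 'rV[R]_n2) : R :=
  gstar g1 (fun x' => F x' y) (fun x' => H x' y) x
  + (f x) ^- 2 * gstar g2 (F x) (H x) y.

(* the functions w = (u^1,...,u^{p-1}, u^p - b f phi, f v^1, ..., f v^{n2}),
   with p = q.+1, u^1 = u ord0, u^p = u ord_max *)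
Definition wcoords (n1 n2 q : nat) (u : 'I_q.+1 -> 'rV[R]_n1 -> R) (f : 'rV[R]_n1 -> R)
  (b : R) (phi : 'rV[R]_n2 -> R) (v : 'I_n2 -> 'rV[R]_n2 -> R)
  (a : 'I_(q.+1 + n2)) : 'rV[R]_n1 -> 'rV[R]_n2 -> R :=
  fun x y => match fintype.split a with
             | inl i => if i == ord_max then u i x - b * f x * phi y else u i x
             | inr k => f x * v k y
             end.

End Defs.

(* Main.v *)
Require Import Defs.
From HB Require Import structures.
From mathcomp Require Import all_boot all_order all_algebra.
From mathcomp Require Import all_classical all_reals all_analysis.
From mathcomp Require Import ring lra.
Import Order.TTheory GRing.Theory Num.Theory.
Import numFieldNormedType.Exports.
Local Open Scope classical_set_scope.
Local Open Scope ring_scope.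

Section H.
Variable R : realType.

Lemma partial_lin (n : nat) (i : 'I_n) (F H : 'rV[R]_n -> R) a c x :
  differentiable F x -> differentiable H x ->
  partial i (fun z => a * F z + c * H z) x = a * partial i F x + c * partial i H x.
Proof.
move=> dF dH; rewrite /partial.
have -> : (fun z => a * F z + c * H z) = (a \*: F) + (c \*: H) by [].
rewrite deriveD; first (rewrite !deriveZ //; exact: diff_derivable).
- exact/derivableZ/diff_derivable.
- exact/derivableZ/diff_derivable.
Qed.

Lemma partial_cst (n : nat) (i : 'I_n) (k : R) x : partial i (fun _ => k) x = 0.
Proof. exact: derive_cst. Qed.

Lemma gstar_linl n (g : 'rV[R]_n -> 'M[R]_n) (L F H K : 'rV[R]_n -> R) (a c : R) x :
  differentiable F x -> differentiable H x ->
  L = (fun z => a * F z + c * H z) ->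
  gstar g L K x = a * gstar g F K x + c * gstar g H K x.
Proof.
move=> dF dH ->; rewrite /gstar !mulr_sumr -big_split; apply: eq_bigr => i _.
rewrite !mulr_sumr -big_split; apply: eq_bigr => j _.
rewrite partial_lin //=; ring.
Qed.

Lemma gstar_linr n (g : 'rV[R]_n -> 'M[R]_n) (L F H K : 'rV[R]_n -> R) (a c : R) x :
  differentiable F x -> differentiable H x ->
  L = (fun z => a * F z + c * H z) ->
  gstar g K L x = a * gstar g K F x + c * gstar g K H x.
Proof.
move=> dF dH ->; rewrite /gstar !mulr_sumr -big_split; apply: eq_bigr => i _.
rewrite !mulr_sumr -big_split; apply: eq_bigr => j _.
rewrite partial_lin //=; ring.
Qed.

Lemma gstar_cstl n (g : 'rV[R]_n -> 'M[R]_n) (k : R) (K : 'rV[R]_n -> R) x :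
  gstar g (fun _ => k) K x = 0.
Proof.
rewrite /gstar big1 // => i _; rewrite big1 // => j _.
by rewrite partial_cst mulr0 mul0r.
Qed.

Lemma gstar_cstr n (g : 'rV[R]_n -> 'M[R]_n) (k : R) (K : 'rV[R]_n -> R) x :
  gstar g K (fun _ => k) x = 0.
Proof.
rewrite /gstar big1 // => i _; rewrite big1 // => j _.
by rewrite partial_cst mulr0.
Qed.

Lemma gstar_sym n (g : 'rV[R]_n -> 'M[R]_n) (F H : 'rV[R]_n -> R) x :
  (g x)^T = g x -> gstar g F H x = gstar g H F x.
Proof.
move=> sym; rewrite /gstar exchange_big; apply: eq_bigr => i _; apply: eq_bigr => j _.
have := congr1 (fun M : 'M[R]_n => M j i) sym; rewrite mxE => ->; ring.
Qed.


Lemma gstarW_form n1 n2 (g1 : 'rV[R]_n1 -> 'M[R]_n1) (g2 : 'rV[R]_n2 -> 'M[R]_n2)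
  (f : 'rV[R]_n1 -> R) (W1 W2 : 'rV[R]_n1 -> 'rV[R]_n2 -> R)
  (a1 b1 a2 b2 : 'rV[R]_n1 -> R) (P1 P2 : 'rV[R]_n2 -> R) x y :
  differentiable a1 x -> differentiable b1 x -> differentiable a2 x -> differentiable b2 x ->
  differentiable P1 y -> differentiable P2 y ->
  (forall x' y', W1 x' y' = a1 x' + b1 x' * P1 y') ->
  (forall x' y', W2 x' y' = a2 x' + b2 x' * P2 y') ->
  gstarW g1 g2 f W1 W2 x y = gstar g1 a1 a2 x + P2 y * gstar g1 a1 b2 x
    + P1 y * gstar g1 b1 a2 x + P1 y * P2 y * gstar g1 b1 b2 x
    + f x ^- 2 * (b1 x * b2 x * gstar g2 P1 P2 y).
Proof.
move=> da1 db1 da2 db2 dP1 dP2 hW1 hW2; rewrite /gstarW.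
have dc : forall n (z : 'rV[R]_n), differentiable (fun _ : 'rV[R]_n => (1:R)) z.
  by move=> n z; exact: differentiable_cst.
rewrite (@gstar_linl _ g1 _ a1 b1 _ 1 (P1 y) x) //; last first.
  by apply: funext => z; rewrite hW1 mul1r mulrC.
rewrite (@gstar_linr _ g1 _ a2 b2 a1 1 (P2 y) x) //; last first.
  by apply: funext => z; rewrite hW2 mul1r mulrC.
rewrite (@gstar_linr _ g1 _ a2 b2 b1 1 (P2 y) x) //; last first.
  by apply: funext => z; rewrite hW2 mul1r mulrC.
rewrite (@gstar_linl _ g2 _ (fun _ => 1) P1 _ (a1 x) (b1 x) y) //; last first.
  by apply: funext => z; rewrite hW1 mulr1.
rewrite gstar_cstl.
rewrite (@gstar_linr _ g2 _ (fun _ => 1) P2 P1 (a2 x) (b2 x) y) //; last first.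
  by apply: funext => z; rewrite hW2 mulr1.
rewrite gstar_cstr; ring.
Qed.


Lemma gstarZl n (g : 'rV[R]_n -> 'M[R]_n) (F K : 'rV[R]_n -> R) (c : R) x :
  differentiable F x -> gstar g (fun z => c * F z) K x = c * gstar g F K x.
Proof.
move=> dF; rewrite (@gstar_linl n g _ F F K c 0 x) //; last by apply: funext => z; ring.
ring.
Qed.

Lemma gstarZr n (g : 'rV[R]_n -> 'M[R]_n) (F K : 'rV[R]_n -> R) (c : R) x :
  differentiable F x -> gstar g K (fun z => c * F z) x = c * gstar g K F x.
Proof.
move=> dF; rewrite (@gstar_linr n g _ F F K c 0 x) //; last by apply: funext => z; ring.
ring.
Qed.

End H.

Theorem proposition4p2 (R : realType) (n1 n2 q : nat)
  (U : set 'rV[R]_n1) (V : set 'rV[R]_n2)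
  (g1 : 'rV[R]_n1 -> 'M[R]_n1) (g2 : 'rV[R]_n2 -> 'M[R]_n2) (K1 : R)
  (f : 'rV[R]_n1 -> R) (u : 'I_q.+1 -> 'rV[R]_n1 -> R) (G1 : 'M[R]_q.+1) (b : R)
  (v : 'I_n2 -> 'rV[R]_n2 -> R) (G2 : 'M[R]_n2) (phi : 'rV[R]_n2 -> R) :
  open U -> open V ->
  is_cmetric U g1 -> is_cmetric V g2 ->
  const_curv U g1 K1 -> flat V g2 ->
  smooth_on U f -> (forall x, U x -> f x != 0) ->
  (forall i, smooth_on U (u i)) ->
  G1 \in unitmx ->
  (forall i j x, U x -> gstar g1 (u i) (u j) x = G1 i j - K1 * u i x * u j x) ->
  (forall x, U x -> f x = u ord0 x) ->
  (forall j, j != ord_max -> G1 ord0 j = 0) ->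
  G1 ord0 ord_max = b -> b != 0 ->
  (forall x, U x -> gstar g1 f f x = - K1 * f x ^+ 2) ->
  (forall k, smooth_on V (v k)) ->
  G2 \in unitmx ->
  (forall k m y, V y -> gstar g2 (v k) (v m) y = G2 k m) ->
  smooth_on V phi ->
  (forall i y, V y -> gstar g2 phi (v i) y = v i y) ->
  (forall y, V y -> gstar g2 phi phi y = 2 * phi y) ->
  forall x y, U x -> V y ->
  forall a c : 'I_(q.+1 + n2),
    gstarW g1 g2 f (wcoords u f b phi v a) (wcoords u f b phi v c) x y
    = block_mx G1 0 0 G2 a c
      - K1 * wcoords u f b phi v a x y * wcoords u f b phi v c x y.
Proof.
move=> oU oV [_ [g1s _]] [_ [g2s _]] _ _ sf fn0 su G1u Huu Hfu G10 G1b bn0 Hff sv G2u Hvv sphi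
  Hpv Hpp x y Ux Vy.
have du : forall i, differentiable (u i) x by move=> i; exact: ((su i 0%N).1 x Ux).
have df : differentiable f x by exact: ((sf 0%N).1 x Ux).
have dv : forall k, differentiable (v k) y by move=> k; exact: ((sv k 0%N).1 y Vy).
have dphi : differentiable phi y by exact: ((sphi 0%N).1 y Vy).
have d0x : differentiable (fun _ : 'rV[R]_n1 => (0:R)) x by exact: differentiable_cst.
have d0y : differentiable (fun _ : 'rV[R]_n2 => (0:R)) y by exact: differentiable_cst.
have dbf : differentiable (fun z => - b * f z) x by exact: differentiableZ.
have hpf : forall i, partial i f x = partial i (u ord0) x.
  move=> i; apply: near_eq_derive.
  by apply: filterS (open_nbhs_nbhs (conj oU Ux)) => z; exact: Hfu.
have gfr : forall H, gstar g1 H f x = gstar g1 H (u ord0) x.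
  by move=> H; rewrite /gstar; apply: eq_bigr => i _; apply: eq_bigr => j _; rewrite hpf.
have gfl : forall H, gstar g1 f H x = gstar g1 (u ord0) H x.
  by move=> H; rewrite /gstar; apply: eq_bigr => i _; apply: eq_bigr => j _; rewrite hpf.
have G1sym : forall i j, G1 i j = G1 j i.
  move=> i j; have h := Huu i j x Ux; rewrite gstar_sym ?g1s // Huu // in h.
  have -> : G1 i j = (G1 i j - K1 * u i x * u j x) + K1 * u i x * u j x by ring.
  rewrite -h; ring.
have Huf : forall i, gstar g1 (u i) f x = G1 i ord0 - K1 * u i x * f x.
  by move=> i; rewrite gfr Huu // Hfu.
have Hfu' : forall i, gstar g1 f (u i) x = G1 ord0 i - K1 * f x * u i x.
  by move=> i; rewrite gfl Huu // Hfu.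
have Hff' : gstar g1 f f x = - K1 * f x ^+ 2 by exact: Hff.
have Hvp : forall k, gstar g2 (v k) phi y = v k y by move=> k; rewrite gstar_sym ?g2s // Hpv.
pose A (a : 'I_(q.+1 + n2)) := match fintype.split a with inl i => u i | inr _ => fun _ : 'rV[R]_n1 => (0:R) end.
pose B (a : 'I_(q.+1 + n2)) := match fintype.split a with
  | inl i => if i == (ord_max : 'I_q.+1) then (fun z => - b * f z) else (fun _ : 'rV[R]_n1 => (0:R))
  | inr _ => f end.
pose P (a : 'I_(q.+1 + n2)) := match fintype.split a with inl _ => phi | inr k => v k end.
have hW : forall a x' y', wcoords u f b phi v a x' y' = A a x' + B a x' * P a y'.
  move=> a x' y'; rewrite /wcoords /A /B /P.
  case: (fintype.split a) => [i|k]; last by ring.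
  by case: eqP => _; ring.
have dA : forall a, differentiable (A a) x by move=> a; rewrite /A; case: (fintype.split a).
have dB : forall a, differentiable (B a) x.
  by move=> a; rewrite /B; case: (fintype.split a) => // i; case: eqP.
have dP : forall a, differentiable (P a) y by move=> a; rewrite /P; case: (fintype.split a).
move=> a c.
rewrite (@gstarW_form R n1 n2 g1 g2 f _ _ _ _ _ _ _ _ x y (dA a) (dB a) (dA c) (dB c) (dP a) (dP c) (hW a) (hW c)).
rewrite !hW /A /B /P -(splitK a) -(splitK c) !unsplitK.
have fx0 := fn0 x Ux.
have G1m0 : G1 ord_max ord0 = b by rewrite G1sym.
have G1i0 : forall i, i != ord_max -> G1 i ord0 = 0 by move=> i hi; rewrite G1sym G10.
case: (fintype.split a) => [i|k]; case: (fintype.split c) => [j|m] /=.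
- case: (eqVneq i ord_max) => [->|hi]; rewrite ?eqxx ?(negbTE hi);
  case: (eqVneq j ord_max) => [->|hj]; rewrite ?eqxx ?(negbTE hj);
  rewrite ?gstar_cstl ?gstar_cstr ?gstarZl ?gstarZr // ?Huu // ?Huf ?Hfu' ?Hff' ?Hpp //
    ?block_mxEul ?G1m0 ?G1b ?G1i0 ?G10 //; field => //.
- case: (eqVneq i ord_max) => [->|hi]; rewrite ?eqxx ?(negbTE hi);
  rewrite ?gstar_cstl ?gstar_cstr ?gstarZl ?gstarZr // ?Huu // ?Huf ?Hfu' ?Hff' ?Hpp // ?Hpv //
    ?block_mxEur ?mxE ?G1m0 ?G1b ?G1i0 ?G10 //; field => //.
- case: (eqVneq j ord_max) => [->|hj]; rewrite ?eqxx ?(negbTE hj);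
  rewrite ?gstar_cstl ?gstar_cstr ?gstarZl ?gstarZr // ?Huu // ?Huf ?Hfu' ?Hff' ?Hpp // ?Hvp //
    ?block_mxEdl ?mxE ?G1m0 ?G1b ?G1i0 ?G10 //; field => //.
- rewrite ?gstar_cstl ?gstar_cstr ?Hff' ?Hvv // ?block_mxEdr; field => //.
Qed.
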